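(* Let $\rho\in\{1/2,1\}$, let $s>0$ and $\eta>0$ be real numbers, let $q\in\mathbb{C}$, and let $\epsilon$ be real with $1<\epsilon\le 1+\rho$. Define the real cubic polynomial $$f(\gamma) = -\gamma^3\eta s^2 - \gamma^2\big[(1-\epsilon+\rho)s^2 + 2\eta s\big] + \gamma\big[2(\epsilon-1)s - s\rho + \rho|q|^2 - \eta\big] + (\epsilon-1).$$ Then $f$ has a positive root of multiplicity one or three (and no other positive root).
   Context: The polynomial $f$ satisfies $f(\gamma)=\gamma(1+\gamma s)^2\ell'(\gamma)$, where $\ell(\gamma) = -\rho\log(1+\gamma s) + \rho|q|^2/(\gamma^{-1}+s) + (\epsilon-1)\log\gamma - \eta\gamma$ for $\gamma>0$. Here $\rho=1/2$ corresponds to a real and $\rho=1$ to a complex signal model, $\epsilon$ is a gamma shape parameter and $\eta>0$ a gamma rate parameter. *)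

(* Defs.v *)
From mathcomp Require Import all_boot all_order all_algebra.
From mathcomp Require Import complex.
Set Implicit Arguments. Unset Strict Implicit. Unset Printing Implicit Defensive.
Import Order.TTheory GRing.Theory Num.Theory.
Local Open Scope ring_scope.

Definition sqnorm (R : rcfType) (q : R[i]) : R := (Normc.normc q) ^+ 2.

Definition fpoly (R : rcfType) (rho s eta eps : R) (q : R[i]) : {poly R} :=
  - (eta * s ^+ 2)%:P * 'X^3
  - ((1 - eps + rho) * s ^+ 2 + 2 * eta * s)%:P * 'X^2
  + (2 * (eps - 1) * s - s * rho + rho * sqnorm q - eta)%:P * 'X
  + (eps - 1)%:P.

(* Main.v *)
Require Import Defs.
From mathcomp Require Import all_boot all_order all_algebra.
From mathcomp Require Import complex.
From mathcomp Require Import ring lra.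
Import Order.TTheory GRing.Theory Num.Theory.
Local Open Scope ring_scope.

Section Aux.
Variable R : rcfType.

Definition cub (a b c d : R) : {poly R} :=
  - a%:P * 'X^3 - b%:P * 'X^2 + c%:P * 'X + d%:P.

Lemma cub_horner a b c d x : (cub a b c d).[x] = - a * x^+ 3 - b * x^+ 2 + c * x + d.
Proof. by rewrite /cub !hornerE. Qed.

Lemma cub_deriv a b c d x :
  (cub a b c d)^`().[x] = - 3%:R * a * x^+ 2 - 2%:R * b * x + c.
Proof.
rewrite /cub !derivE !hornerE /=.
ring.
Qed.

Lemma cub_main a b c d : 0 < a -> 0 < b -> 0 < d ->
  exists g : R, [/\ 0 < g, root (cub a b c d) g,
    (mup g (cub a b c d) = 1%N \/ mup g (cub a b c d) = 3%N)
    & forall x : R, 0 < x -> root (cub a b c d) x -> x = g].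
Proof.
move=> a0 b0 d0.
set p := cub a b c d.
have uniq : forall x y, 0 < x -> 0 < y -> root p x -> root p y -> x = y.
  move=> x y x0 y0; rewrite /root !cub_horner => /eqP hx /eqP hy.
  have E : (y - x) * (a * x * y * (x + y) + b * x * y + d) = 0.
    have -> : (y - x) * (a * x * y * (x + y) + b * x * y + d) =
      y * (- a * x^+ 3 - b * x^+ 2 + c * x + d) - x * (- a * y^+ 3 - b * y^+ 2 + c * y + d) by ring.
    by rewrite hx hy !mulr0 subr0.
  move/eqP: E; rewrite mulf_eq0 => /orP [|/eqP E].
    by rewrite subr_eq0 => /eqP ->.
  have : 0 < a * x * y * (x + y) + b * x * y + d.
    apply: ltr_wpDl; last by [].
    apply: addr_ge0; apply/ltW.
      by rewrite !mulr_gt0 ?addr_gt0.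
    by rewrite !mulr_gt0.
  by rewrite E ltxx.
set M := 1 + (`|c| + d) / a.
have M1 : 1 <= M by rewrite lerDl divr_ge0 // ?addr_ge0 // ltW.
have aM : `|c| + d <= a * M.
  rewrite /M mulrDr mulr1 mulrCA divff ?gt_eqF // mulr1 lerDr ltW //.
have M0 : 0 < M by apply: lt_le_trans M1.
have pM : p.[M] < 0.
  rewrite cub_horner.
  have h1 : c * M <= `|c| * M by rewrite ler_pM2r // real_ler_norm ?num_real.
  have h2 : a * M * M <= a * M * (M * M).
    rewrite ler_pM2l ?mulr_gt0 //.
    by rewrite -{1}(mulr1 M) ler_pM2l.
  have h3 : (`|c| + d) * M <= a * M * M by rewrite ler_pM2r.
  have h4 : d <= d * M by rewrite -{1}(mulr1 d) ler_pM2l.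
  have h5 : 0 < b * M^+ 2 by rewrite mulr_gt0 // exprn_gt0.
  have h6 : - a * M ^+ 3 = - (a * M * (M * M)) by rewrite !exprS expr0; ring.
  lra.
have [x /andP [x0 xM] rx] : exists2 x, 0 <= x <= M & root (- p) x.
  apply: Num.poly_ivt; first exact: ltW.
  rewrite !hornerN cub_horner; apply/andP; split; last lra.
  have -> : - a * 0 ^+ 3 - b * 0 ^+ 2 + c * 0 + d = d by rewrite !expr0n /=; ring.
  lra.
have rpx : root p x by move: rx; rewrite /root hornerN oppr_eq0.
have xpos : 0 < x.
  rewrite lt0r x0 andbT; apply/negP => /eqP x00.
  move: rpx; rewrite x00 /root cub_horner !expr0n /= !mulr0 !subr0 addr0.
  by rewrite add0r gt_eqF.
exists x; split => //; last first.
  by move=> y y0 ry; apply: uniq.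
left.
have [qq pq] := factor_theorem p x rpx.
have qx : qq.[x] = p^`().[x].
  by rewrite pq derivM derivXsubC !hornerE subrr; ring.
have qx0 : qq.[x] != 0.
  rewrite qx cub_deriv.
  move: rpx; rewrite /root cub_horner => /eqP hx.
  have E : x * (- 3%:R * a * x ^+ 2 - 2%:R * b * x + c) =
     - 2%:R * a * x^+ 3 - b * x^+ 2 - d.
    have -> : - 2%:R * a * x^+ 3 - b * x^+ 2 - d = - 2%:R * a * x^+ 3 - b * x^+ 2 - d
       + (- a * x ^+ 3 - b * x ^+ 2 + c * x + d) by rewrite hx addr0.
    rewrite !exprS expr0; ring.
  apply/negP => /eqP h0; move: E; rewrite h0 mulr0 => E.
  have : 0 < 2%:R * a * x^+ 3 + b * x^+ 2 + d.
    apply: ltr_wpDl => //; apply: addr_ge0; apply/ltW;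
      rewrite ?mulr_gt0 ?exprn_gt0 //.
  lra.
have q0 : qq != 0 by apply: contraNneq qx0 => ->; rewrite horner0.
rewrite pq mupM ?q0 ?polyXsubC_eq0 // mupNroot // .
have := mup_XsubCX 1 x x; rewrite expr1 eqxx => ->; by [].
Qed.
End Aux.
Arguments cub {R}.
Arguments cub_main {R}.

Theorem lemma2 (R : rcfType) (rho s eta eps : R) (q : R[i]) :
  (rho = 2^-1 \/ rho = 1) -> 0 < s -> 0 < eta -> 1 < eps -> eps <= 1 + rho ->
  exists g : R, [/\ 0 < g, root (fpoly rho s eta eps q) g,
    (mup g (fpoly rho s eta eps q) = 1%N \/ mup g (fpoly rho s eta eps q) = 3%N)
    & forall x : R, 0 < x -> root (fpoly rho s eta eps q) x -> x = g].
Proof.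
move=> _ s0 e0 eps1 epsr.
have -> : fpoly rho s eta eps q = cub (eta * s ^+ 2) ((1 - eps + rho) * s ^+ 2 + 2 * eta * s)
   (2 * (eps - 1) * s - s * rho + rho * sqnorm q - eta) (eps - 1).
  by rewrite /fpoly /cub !mulNr.
apply: cub_main.
- by rewrite mulr_gt0 // exprn_gt0.
- have h : 0 <= 1 - eps + rho by rewrite addrAC subr_ge0.
  have h2 : 0 <= s ^+ 2 by rewrite exprn_ge0 // ltW.
  apply: ltr_wpDl; first exact: mulr_ge0.
  by apply: mulr_gt0 => //; apply: mulr_gt0.
- by rewrite subr_gt0.
Qed.
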